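(* Let $S\subset\mathbb{R}^q$ be compact and $\ell:\mathbb{R}^q\times\mathbb{R}^q\to(0,1)$ continuous. Let $s\in S$, let $(\xi_k)_{k\in\mathbb{N}}\subset\mathbb{R}^q$ be bounded, and let $d_1,d_2,\dots\in\{0,1\}$ be independent random variables with $\Pr(d_k=1)=\ell(s,\xi_k)$. Let $c_1,\dots,c_M\in S$ be distinct, let $\hat p_0:\{1,\dots,M\}\to(0,1)$ with $\sum_i\hat p_0(i)=1$, and define $\hat p_k$ by $$\hat p_k(i\mid d_{1:k};\xi_{1:k})=\frac{g(d_k\mid c_i;\xi_k)\,\hat p_{k-1}(i\mid d_{1:k-1};\xi_{1:k-1})}{\sum_{j=1}^M g(d_k\mid c_j;\xi_k)\,\hat p_{k-1}(j\mid d_{1:k-1};\xi_{1:k-1})},$$ where $g(d\mid x;\xi)=\ell(x,\xi)^d(1-\ell(x,\xi))^{1-d}$. Suppose $c_j=s$ for some $j\in\{1,\dots,M\}$. If for every $i\neq j$ there exists $p>\tfrac12$ such that $$\liminf_{n\to\infty}\frac{1}{n^p}\sum_{k=1}^n\big(\ell(s,\xi_k)-\ell(c_i,\xi_k)\big)^2>0,$$ then $\hat p_k(j\mid d_{1:k};\xi_{1:k})\to 1$ almost surely. *)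

(* Defs.v *)
From HB Require Import structures.
From mathcomp Require Import all_boot all_order all_algebra.
From mathcomp Require Import all_classical all_reals all_analysis.
Set Implicit Arguments. Unset Strict Implicit. Unset Printing Implicit Defensive.
Import Order.TTheory GRing.Theory Num.Theory.
Import numFieldNormedType.Exports.
Local Open Scope classical_set_scope.
Local Open Scope ring_scope.

Definition glik (R : realType) (q : nat) (l : 'rV[R]_q -> 'rV[R]_q -> R)
  (d : bool) (x xi : 'rV[R]_q) : R :=
  l x xi ^+ nat_of_bool d * (1 - l x xi) ^+ (1 - nat_of_bool d).

(* Bayesian posterior p_k(i | d_{1:k}; xi_{1:k}) on the candidates c_1..c_M,
   given an observation sequence dd (dd k = d_k, k >= 1) and designs xi. *)
Fixpoint phat (R : realType) (q M : nat) (l : 'rV[R]_q -> 'rV[R]_q -> R)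
  (c : 'I_M -> 'rV[R]_q) (p0 : 'I_M -> R) (xi : nat -> 'rV[R]_q)
  (dd : nat -> bool) (k : nat) (i : 'I_M) : R :=
  match k with
  | 0 => p0 i
  | k'.+1 =>
      glik l (dd k'.+1) (c i) (xi k'.+1) * phat l c p0 xi dd k' i /
      \sum_(j < M) glik l (dd k'.+1) (c j) (xi k'.+1) * phat l c p0 xi dd k' j
  end.

Definition indep_bits (dT : measure_display) (Omega : measurableType dT)
  (R : realType) (P : probability Omega R) (dd : nat -> Omega -> bool) : Prop :=
  forall (K : seq nat) (b : nat -> bool), uniq K -> all (fun k => 0 < k)%N K ->
    P (\big[setI/setT]_(k <- K) [set w | dd k w = b k]) =
    (\prod_(k <- K) P [set w | dd k w = b k])%E.

(* Main.v *)
Require Import Defs.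
From HB Require Import structures.
From mathcomp Require Import all_boot all_order all_algebra.
From mathcomp Require Import all_classical all_reals all_analysis.
From mathcomp Require Import ring lra.
Import Order.TTheory GRing.Theory Num.Theory.
Set Implicit Arguments. Unset Strict Implicit. Unset Printing Implicit Defensive.
Import numFieldNormedType.Exports.
Local Open Scope classical_set_scope.
Local Open Scope ring_scope.
Definition Gp (R : realType) (q M : nat) (l : 'rV[R]_q -> 'rV[R]_q -> R)
  (c : 'I_M -> 'rV[R]_q) (xi : nat -> 'rV[R]_q) (db : nat -> bool) (n : nat)
  (i : 'I_M) : R :=
  \prod_(k < n) glik l (db k.+1) (c i) (xi k.+1).

Lemma glik_gt0 (R : realType) q (l : 'rV[R]_q -> 'rV[R]_q -> R) b x y :
  (forall x y, 0 < l x y < 1) -> 0 < glik l b x y.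
Proof.
move=> hl; have /andP[h0 h1] := hl x y.
by rewrite /glik; case: b => /=; rewrite ?expr1 ?expr0 ?mulr1 ?mul1r ?subr_gt0.
Qed.

Lemma Gp_gt0 (R : realType) (q M : nat) (l : 'rV[R]_q -> 'rV[R]_q -> R)
  (c : 'I_M -> 'rV[R]_q) xi db n i :
  (forall x y, 0 < l x y < 1) -> 0 < Gp l c xi db n i.
Proof. by move=> hl; apply: prodr_gt0 => k _; exact: glik_gt0. Qed.

Lemma sum_gt0_ord (R : realType) M (F : 'I_M -> R) (i : 'I_M) :
  (forall m, 0 < F m) -> 0 < \sum_(m < M) F m.
Proof.
move=> hF; rewrite (bigD1 i) //=; apply: (lt_le_trans (hF i)).
by rewrite lerDl; apply: sumr_ge0 => m _; exact: ltW.
Qed.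

Lemma phat_closed (R : realType) (q M : nat) (l : 'rV[R]_q -> 'rV[R]_q -> R)
  (c : 'I_M -> 'rV[R]_q) (p0 : 'I_M -> R) xi db :
  (forall x y, 0 < l x y < 1) -> (forall i, 0 < p0 i) -> \sum_(i < M) p0 i = 1 ->
  forall n i, phat l c p0 xi db n i =
    p0 i * Gp l c xi db n i / \sum_(m < M) p0 m * Gp l c xi db n m.
Proof.
move=> hl hp hs; elim=> [|n IH] i.
  rewrite /Gp big_ord0 mulr1.
  under eq_bigr do rewrite big_ord0 mulr1.
  by rewrite hs divr1.
rewrite /= IH.
under eq_bigr do rewrite IH.
set Z := \sum_(m < M) p0 m * Gp l c xi db n m.
have Zgt0 : 0 < Z.
  by apply: (sum_gt0_ord i) => m; apply: mulr_gt0 => //; exact: Gp_gt0.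
have Wgt0 : 0 < \sum_(m < M) p0 m * Gp l c xi db n.+1 m.
  by apply: (sum_gt0_ord i) => m; apply: mulr_gt0 => //; exact: Gp_gt0.
have E : \sum_(m < M) glik l (db n.+1) (c m) (xi n.+1) *
           (p0 m * Gp l c xi db n m / Z)
   = (\sum_(m < M) p0 m * Gp l c xi db n.+1 m) / Z.
  rewrite mulr_suml; apply: eq_bigr => m _; rewrite /Gp big_ord_recr /=.
  by field; rewrite gt_eqF.
rewrite E /Gp big_ord_recr /= -/(Gp _ _ _ _ _ _).
move: Wgt0; rewrite /Gp; under eq_bigr do rewrite big_ord_recr /=.
move=> Wgt0.
by field; rewrite ?gt_eqF.
Qed.
Lemma phat_bound (R : realType) (q M : nat) (l : 'rV[R]_q -> 'rV[R]_q -> R)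
  (c : 'I_M -> 'rV[R]_q) (p0 : 'I_M -> R) xi db (j : 'I_M) n :
  (forall x y, 0 < l x y < 1) -> (forall i, 0 < p0 i) -> \sum_(i < M) p0 i = 1 ->
  0 <= 1 - phat l c p0 xi db n j <=
  \sum_(i < M | i != j) p0 i / p0 j * (Gp l c xi db n i / Gp l c xi db n j).
Proof.
move=> hl hp hs; rewrite (@phat_closed _ _ _ l c p0 xi db hl hp hs) (bigD1 j) //=.
set S := \sum_(i < M | i != j) _.
have aj : 0 < p0 j * Gp l c xi db n j by apply: mulr_gt0 => //; exact: Gp_gt0.
have S0 : 0 <= S.
  by apply: sumr_ge0 => i _; apply: ltW; apply: mulr_gt0 => //; exact: Gp_gt0.
have -> : 1 - p0 j * Gp l c xi db n j / (p0 j * Gp l c xi db n j + S) =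
          S / (p0 j * Gp l c xi db n j + S).
  by field; rewrite gt_eqF // ltr_wpDr.
apply/andP; split; first by rewrite divr_ge0 // addr_ge0 // ltW.
rewrite /S mulr_suml; apply: ler_sum => i ij.
have ai : 0 < p0 i * Gp l c xi db n i by apply: mulr_gt0 => //; exact: Gp_gt0.
have Gj : 0 < Gp l c xi db n j by exact: Gp_gt0.
rewrite (_ : p0 i / p0 j * _ = (p0 i * Gp l c xi db n i) / (p0 j * Gp l c xi db n j)); last first.
  by field; rewrite !gt_eqF.
rewrite ler_pM2l // lef_pV2 ?posrE ?ltr_wpDr //.
by rewrite lerDl.
Qed.

Lemma cvg_one (R : realType) (u : nat -> R) (K : R) :
  (\forall n \near \oo, 0 <= 1 - u n <= K / n%:R) -> u @ \oo --> (1 : R).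
Proof.
move=> hu; apply/cvgrPdist_lt => e e0.
near=> n.
have /andP[h1 h2] : 0 <= 1 - u n <= K / n%:R by near: n.
have hn : K / e < n%:R by near: n; exact: nbhs_infty_gtr.
have n0 : 0 < (n%:R : R) by near: n; exact: nbhs_infty_gtr.
rewrite ger0_norm //; apply: (le_lt_trans h2).
by rewrite mulrC ltr_pdivrMl // -ltr_pdivrMr.
Unshelve. all: by end_near.
Qed.
Lemma hell_aux (R : realType) (a b P : R) : 0 <= a <= 1 -> 0 <= b <= 1 -> 0 <= P ->
  P ^+ 2 = a * b -> P <= (a + b) / 2 - (a - b) ^+ 2 / 8.
Proof.
move=> /andP[a0 a1] /andP[b0 b1] P0 hP.
have P1 : P <= (a + b) / 2.
  rewrite leNgt; apply/negP => h.
  have h2 : 0 < (P - (a + b) / 2) * (P + (a + b) / 2).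
    apply: mulr_gt0; first by rewrite subr_gt0.
    lra.
  have : (P - (a + b) / 2) * (P + (a + b) / 2) = - ((a - b) ^+ 2 / 4).
    by rewrite -subr_sqr hP; field.
  move=> e; rewrite e in h2; have := sqr_ge0 (a - b); lra.
have hm : ((a + b) / 2 - P) * ((a + b) / 2 + P) = (a - b) ^+ 2 / 4.
  by rewrite -subr_sqr hP; field.
have P2 : P <= 1 by nra.
nra.
Qed.

Lemma bc_bound (R : realType) (a b : R) : 0 < a < 1 -> 0 < b < 1 ->
  Num.sqrt (a / b) * b + Num.sqrt ((1 - a) / (1 - b)) * (1 - b)
  <= 1 - (b - a) ^+ 2 / 4.
Proof.
move=> /andP[a0 a1] /andP[b0 b1].
have h1 : Num.sqrt (a / b) * b <= (a + b) / 2 - (a - b) ^+ 2 / 8.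
  apply: hell_aux; rewrite ?mulr_ge0 ?sqrtr_ge0 ?ltW //; try lra.
  rewrite exprMn sqr_sqrtr ?divr_ge0 ?ltW //; field; lra.
have h2 : Num.sqrt ((1 - a) / (1 - b)) * (1 - b) <=
   ((1 - a) + (1 - b)) / 2 - ((1 - a) - (1 - b)) ^+ 2 / 8.
  apply: hell_aux; rewrite ?mulr_ge0 ?sqrtr_ge0 ?subr_ge0 ?ltW //; try lra.
  rewrite exprMn sqr_sqrtr ?divr_ge0 ?subr_ge0 ?ltW //; field; lra.
have e1 : ((1 - a) - (1 - b)) ^+ 2 = (a - b) ^+ 2 by ring.
have e2 : (b - a) ^+ 2 = (a - b) ^+ 2 by ring.
rewrite e1 in h2; rewrite e2; lra.
Qed.
Lemma decay (R : realType) (dl p : R) (n : nat) : 0 < dl -> 1 / 2 < p -> (0 < n)%N ->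
  n%:R * expR (- (dl * n%:R `^ p / 4)) <= (24 / dl) ^+ 6 / n%:R ^+ 2.
Proof.
move=> dl0 p12 n0.
set x : R := n%:R.
have x1 : 1 <= x by rewrite /x ler1n.
have x0 : 0 < x by lra.
have xp0 : 0 < x `^ p by rewrite powR_gt0.
set y := dl * x `^ p / 4.
have y0 : 0 < y by rewrite /y divr_gt0 // mulr_gt0.
have hy2 : x <= (x `^ p) ^+ 2.
  rewrite -powR_mulrn ?powR_ge0 // -powRrM.
  rewrite -{1}(powRr1 (ltW x0)); apply: ler_powR => //; lra.
have hexp : (y / 6) ^+ 6 <= expR y.
  rewrite -[in leRHS](_ : 6%:R * (y / 6) = y); last by field.
  have e6 : y / 6 <= expR (y / 6) by have := expR_ge1Dx (y / 6); lra.
  rewrite expRM_natl; apply: lerXn2r => //; rewrite nnegrE ?expR_ge0 //; lra.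
set L := dl ^+ 6 * x ^+ 3 / 24 ^+ 6.
have L0 : 0 < L by rewrite /L divr_gt0 ?mulr_gt0 ?exprn_gt0.
have hL : L <= expR y.
  apply: le_trans hexp; rewrite /L /y.
  have -> : (dl * x `^ p / 4 / 6) ^+ 6 = dl ^+ 6 * ((x `^ p) ^+ 2) ^+ 3 / 24 ^+ 6.
    by rewrite -exprM; field.
  apply: ler_wpM2r; first by rewrite invr_ge0 exprn_ge0.
  apply: ler_wpM2l; first by rewrite exprn_ge0 // ltW.
  apply: lerXn2r => //; rewrite nnegrE; [exact: ltW | exact: sqr_ge0].
rewrite expRN; apply: (le_trans (y := x / L)).
  by rewrite ler_pM2l // lef_pV2 ?posrE ?expR_gt0.
rewrite le_eqVlt; apply/orP; left; apply/eqP; rewrite /L; field; rewrite ?gt_eqF //.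
Qed.
Lemma liminf_pos (R : realType) (u : nat -> R) :
  (0 < limn_einf (fun n => (u n)%:E))%E ->
  exists2 dl : R, 0 < dl & exists N, forall n, (N <= n)%N -> dl <= u n.
Proof.
rewrite limn_einf_lim => h.
have := @cvg_einfs_sup R (fun n => (u n)%:E); move/cvg_lim => E.
rewrite E in h; last by [].
have [y [N _ <-] hy] := ereal_sup_gt h.
have hle : forall n, (N <= n)%N -> (einfs (fun n => (u n)%:E) N <= (u n)%:E)%E.
  by move=> n Nn; apply: ereal_inf_lbound; exists n.
have := hle N (leqnn N).
case E2 : (einfs (fun n => (u n)%:E) N) => [r| |] //=; last by rewrite E2 in hy.
move=> _; exists r; first by rewrite E2 lte_fin in hy.
by exists N => n /hle; rewrite E2 lee_fin.
Qed.
Lemma big_iota1 (T : Type) (idx : T) (op : Monoid.law idx) n (F : nat -> T) :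
  \big[op/idx]_(k <- iota 1 n) F k = \big[op/idx]_(k < n) F k.+1.
Proof.
rewrite -[1%N]addn0 iotaDl big_map (_ : iota 0 n = index_iota 0 n); last by rewrite /index_iota subn0.
rewrite big_mkord.
by apply: eq_bigr => k _; rewrite add1n.
Qed.

Lemma dd_meas (dT : measure_display) (Omega : measurableType dT)
  (dd : nat -> Omega -> bool) :
  (forall k, (0 < k)%N -> measurable [set w | dd k w = true]) ->
  forall k b, (0 < k)%N -> measurable [set w | dd k w = b].
Proof.
move=> hm k [] k0; first exact: hm.
rewrite (_ : [set w | dd k w = false] = ~` [set w | dd k w = true]).
  exact/measurableC/hm.
by apply/seteqP; split => w /=; case: (dd k w).
Qed.

Lemma dd_prob (R : realType) (q : nat) (l : 'rV[R]_q -> 'rV[R]_q -> R)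
  (s : 'rV[R]_q) (xi : nat -> 'rV[R]_q)
  (dT : measure_display) (Omega : measurableType dT) (P : probability Omega R)
  (dd : nat -> Omega -> bool) :
  (forall k, (0 < k)%N -> measurable [set w | dd k w = true]) ->
  (forall k, (0 < k)%N -> P [set w | dd k w = true] = (l s (xi k))%:E) ->
  forall k b, (0 < k)%N -> P [set w | dd k w = b] = (glik l b s (xi k))%:E.
Proof.
move=> hm hP k [] k0; first by rewrite hP // /glik /= expr1 expr0 mulr1.
rewrite (_ : [set w | dd k w = false] = ~` [set w | dd k w = true]); last first.
  by apply/seteqP; split => w /=; case: (dd k w).
rewrite probability_setC; last exact: hm.
by rewrite hP // /glik /= expr0 expr1 mul1r EFinB.
Qed.

Definition cyl (dT : measure_display) (Omega : measurableType dT)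
  (dd : nat -> Omega -> bool) n (f : {ffun 'I_n -> bool}) : set Omega :=
  \big[setI/setT]_(k < n) [set w | dd k.+1 w = f k].

Lemma cyl_meas (dT : measure_display) (Omega : measurableType dT)
  (dd : nat -> Omega -> bool) n (f : {ffun 'I_n -> bool}) :
  (forall k, (0 < k)%N -> measurable [set w | dd k w = true]) ->
  measurable (cyl dd f).
Proof.
move=> hm; apply: bigsetI_measurable => k _; exact: dd_meas.
Qed.

Lemma cyl_prob (R : realType) (q : nat) (l : 'rV[R]_q -> 'rV[R]_q -> R)
  (s : 'rV[R]_q) (xi : nat -> 'rV[R]_q)
  (dT : measure_display) (Omega : measurableType dT) (P : probability Omega R)
  (dd : nat -> Omega -> bool) n (f : {ffun 'I_n -> bool}) :
  (forall k, (0 < k)%N -> measurable [set w | dd k w = true]) ->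
  indep_bits P dd ->
  (forall k, (0 < k)%N -> P [set w | dd k w = true] = (l s (xi k))%:E) ->
  P (cyl dd f) = (\prod_(k < n) glik l (f k) s (xi k.+1))%:E.
Proof.
move=> hm hind hP.
pose b k := odflt false (omap f (insub k.-1)).
have hb (k : 'I_n) : b k.+1 = f k by rewrite /b /= valK.
have := hind (iota 1 n) b (iota_uniq 1 n).
have pos : all (fun k => (0 < k)%N) (iota 1 n).
  by apply/allP => k; rewrite mem_iota; case/andP.
move=> /(_ pos); rewrite !big_iota1 => e.
rewrite /cyl (eq_bigr (fun k : 'I_n => [set w | dd k.+1 w = b k.+1])); last first.
  by move=> k _; rewrite hb.
rewrite e -prodEFin; apply: eq_bigr => k _.
by rewrite (dd_prob hm hP) // hb.
Qed.
Definition hh (R : realType) (q : nat) (l : 'rV[R]_q -> 'rV[R]_q -> R)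
  (s x : 'rV[R]_q) (xi : nat -> 'rV[R]_q) (k : nat) (b : bool) : R :=
  Num.sqrt (glik l b x (xi k) / glik l b s (xi k)).

Definition goodf (R : realType) (q : nat) (l : 'rV[R]_q -> 'rV[R]_q -> R)
  (s x : 'rV[R]_q) (xi : nat -> 'rV[R]_q) n (f : {ffun 'I_n -> bool}) : bool :=
  1 < n%:R * \prod_(k < n) hh l s x xi k.+1 (f k).

Definition Bset (R : realType) (q : nat) (l : 'rV[R]_q -> 'rV[R]_q -> R)
  (s x : 'rV[R]_q) (xi : nat -> 'rV[R]_q)
  (dT : measure_display) (Omega : measurableType dT)
  (dd : nat -> Omega -> bool) n : set Omega :=
  \big[setU/set0]_(f : {ffun 'I_n -> bool} | goodf l s x xi f) cyl dd f.

Lemma glikT (R : realType) q (l : 'rV[R]_q -> 'rV[R]_q -> R) x y :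
  glik l true x y = l x y.
Proof. by rewrite /glik /= expr1 expr0 mulr1. Qed.

Lemma glikF (R : realType) q (l : 'rV[R]_q -> 'rV[R]_q -> R) x y :
  glik l false x y = 1 - l x y.
Proof. by rewrite /glik /= expr0 expr1 mul1r. Qed.

Lemma measure_bigsetU_le (T : finType) d (Omega : measurableType d)
  (R : realType) (mu : {measure set Omega -> \bar R}) (Pr : pred T)
  (F : T -> set Omega) : (forall t, measurable (F t)) ->
  (mu (\big[setU/set0]_(t | Pr t) F t) <= \sum_(t | Pr t) mu (F t))%E.
Proof.
move=> mF.
suff : measurable (\big[setU/set0]_(t | Pr t) F t) /\
       (mu (\big[setU/set0]_(t | Pr t) F t) <= \sum_(t | Pr t) mu (F t))%E by case.
apply: (big_rec2 (fun X y => measurable X /\ (mu X <= y)%E)).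
  by split; rewrite ?measure0.
move=> t X y _ [mX hX]; split; first exact: measurableU.
apply: le_trans (measureU2 _ _ _) _ => //.
exact: leeD.
Qed.

Lemma PB_bound (R : realType) (q : nat) (l : 'rV[R]_q -> 'rV[R]_q -> R)
  (s x : 'rV[R]_q) (xi : nat -> 'rV[R]_q)
  (dT : measure_display) (Omega : measurableType dT) (P : probability Omega R)
  (dd : nat -> Omega -> bool) n :
  (forall x y, 0 < l x y < 1) ->
  (forall k, (0 < k)%N -> measurable [set w | dd k w = true]) ->
  indep_bits P dd ->
  (forall k, (0 < k)%N -> P [set w | dd k w = true] = (l s (xi k))%:E) ->
  (P (Bset l s x xi dd n) <=
   (n%:R * \prod_(k < n) (1 - (l s (xi k.+1) - l x (xi k.+1)) ^+ 2 / 4))%:E)%E.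
Proof.
move=> hl hm hind hP.
apply: le_trans (measure_bigsetU_le _ _ _) _; first by move=> f; exact: cyl_meas.
rewrite (eq_bigr (fun f : {ffun 'I_n -> bool} => (\prod_(k < n) glik l (f k) s (xi k.+1))%:E)); last first.
  by move=> f _; exact: cyl_prob.
rewrite sumEFin lee_fin.
have hh0 : forall k b, 0 <= hh l s x xi k b by move=> k b; exact: sqrtr_ge0.
have g0 : forall k b z, 0 < glik l b z (xi k) by move=> *; exact: glik_gt0.
apply: (le_trans (y := \sum_(f : {ffun 'I_n -> bool} | goodf l s x xi f)
   (n%:R * \prod_(k < n) hh l s x xi k.+1 (f k)) *
   \prod_(k < n) glik l (f k) s (xi k.+1))).
  apply: ler_sum => f gf; rewrite ler_peMl //.
    by apply: prodr_ge0 => k _; exact: ltW.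
  exact: ltW.
apply: (le_trans (y := \sum_(f : {ffun 'I_n -> bool})
   (n%:R * \prod_(k < n) hh l s x xi k.+1 (f k)) *
   \prod_(k < n) glik l (f k) s (xi k.+1))).
  rewrite [leRHS](bigID (fun f => goodf l s x xi f)) /= lerDl.
  apply: sumr_ge0 => f _; apply: mulr_ge0; last by apply: prodr_ge0 => k _; exact: ltW.
  by apply: mulr_ge0 => //; apply: prodr_ge0.
under eq_bigr do rewrite -mulrA -big_split /=.
rewrite -mulr_sumr; apply: ler_wpM2l => //.
rewrite -(bigA_distr_bigA (fun (k : 'I_n) b => hh l s x xi k.+1 b * glik l b s (xi k.+1))).
apply: ler_prod => k _; apply/andP; split.
  by apply: sumr_ge0 => b _; apply: mulr_ge0 => //; exact: ltW.
rewrite big_bool /hh !glikT !glikF.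
apply: bc_bound; exact: hl.
Qed.
Lemma inv_sq_tel (R : realType) (n : nat) : (0 < n)%N ->
  (n%:R ^+ 2)^-1 <= 8 * ((n.+1%:R)^-1 - (n.+2%:R)^-1 : R).
Proof.
move=> n0; have x1 : (1 : R) <= n%:R by rewrite ler1n.
have -> : 8 * ((n.+1%:R)^-1 - (n.+2%:R)^-1 : R) = 8 / ((n%:R + 1) * (n%:R + 2)).
  rewrite -[n.+2]addn1 natrD -[n.+1]addn1 natrD /=.
  by field; apply/andP; split; rewrite gt_eqF //; lra.
rewrite -[leLHS]mul1r ler_pdivrMr ?exprn_gt0 //; last by lra.
rewrite mulrAC ler_pdivlMr; last by apply: mulr_gt0; lra.
rewrite mul1r; nra.
Qed.
Lemma Bset_meas (R : realType) (q : nat) (l : 'rV[R]_q -> 'rV[R]_q -> R)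
  (s x : 'rV[R]_q) (xi : nat -> 'rV[R]_q)
  (dT : measure_display) (Omega : measurableType dT)
  (dd : nat -> Omega -> bool) n :
  (forall k, (0 < k)%N -> measurable [set w | dd k w = true]) ->
  measurable (Bset l s x xi dd n).
Proof. by move=> hm; apply: bigsetU_measurable => f _; exact: cyl_meas. Qed.

Lemma ae_rho (R : realType) (q : nat) (l : 'rV[R]_q -> 'rV[R]_q -> R)
  (s x : 'rV[R]_q) (xi : nat -> 'rV[R]_q)
  (dT : measure_display) (Omega : measurableType dT) (P : probability Omega R)
  (dd : nat -> Omega -> bool) :
  (forall x y, 0 < l x y < 1) ->
  (forall k, (0 < k)%N -> measurable [set w | dd k w = true]) ->
  indep_bits P dd ->
  (forall k, (0 < k)%N -> P [set w | dd k w = true] = (l s (xi k))%:E) ->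
  (exists p : R, 1 / 2 < p /\
     (0 < limn_einf (fun n : nat =>
        ((n%:R `^ p)^-1 *
          \sum_(1 <= k < n.+1) (l s (xi k) - l x (xi k)) ^+ 2)%:E))%E) ->
  \forall w \near almost_everywhere P, \forall n \near \oo,
     n%:R * \prod_(k < n) hh l s x xi k.+1 (dd k.+1 w) <= 1.
Proof.
move=> hl hm hind hP [p [p12 hlim]].
have [dl dl0 [N0 hN0]] := liminf_pos hlim.
set N := maxn N0 1.
set K := (24 / dl) ^+ 6.
have K0 : 0 <= K by rewrite exprn_ge0 // divr_ge0 // ltW.
pose E n := if (N <= n)%N then Bset l s x xi dd n else set0.
have mE : forall n, measurable (E n).
  by move=> n; rewrite /E; case: ifP => _ //; exact: Bset_meas.
have hPE : forall n, (P (E n) <= (8 * K * ((n.+1%:R)^-1 - (n.+2%:R)^-1))%:E)%E.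
  move=> n; rewrite /E; case: ifPn => Nn; last first.
    rewrite measure0 lee_fin; apply: mulr_ge0; first by rewrite mulr_ge0.
    by rewrite subr_ge0 lef_pV2 ?posrE ?ler_nat ?ltr0n.
  have n0 : (0 < n)%N by apply: leq_trans Nn; rewrite leq_maxr.
  have nN0 : (N0 <= n)%N by apply: leq_trans Nn; rewrite leq_maxl.
  move/le_trans: (@PB_bound R q l s x xi dT Omega P dd n hl hm hind hP); apply.
  rewrite lee_fin.
  have hS : dl * n%:R `^ p <=
            \sum_(k < n) (l s (xi k.+1) - l x (xi k.+1)) ^+ 2.
    have := hN0 n nN0.
    rewrite big_add1 /= big_mkord.
    have np : 0 < n%:R `^ p by rewrite powR_gt0 // ltr0n.
    by rewrite -ler_pdivlMr // mulrC.
  apply: (le_trans (y := n%:R * expR (- (dl * n%:R `^ p / 4)))).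
    apply: ler_wpM2l => //.
    apply: (le_trans (y := \prod_(k < n) expR (- ((l s (xi k.+1) - l x (xi k.+1)) ^+ 2 / 4)))).
      apply: ler_prod => k _; apply/andP; split.
        have /andP[a0 a1] := hl s (xi k.+1); have /andP[b0 b1] := hl x (xi k.+1).
        rewrite subr_ge0 ler_pdivrMr //; nra.
      by apply: (le_trans _ (expR_ge1Dx _)); lra.
    rewrite -expR_sum; rewrite ler_expR sumrN lerN2.
    by rewrite -mulr_suml ler_pM2r.
  move/le_trans: (decay dl0 p12 n0); apply.
  apply: (le_trans (y := K * (8 * (n.+1%:R^-1 - n.+2%:R^-1)))); last first.
    by rewrite mulrA (mulrC K).
  by apply: ler_wpM2l => //; exact: inv_sq_tel.
have hsum : (\sum_(n <oo) P (E n) < +oo)%E.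
  apply: (le_lt_trans (y := (8 * K)%:E)); last by rewrite ltry.
  apply: lime_le; first by apply: is_cvg_nneseries.
  apply: nearW => m.
  move/le_trans: (@lee_sum R nat _ _ (index_iota 0 m) xpredT (fun n _ => hPE n)); apply.
  rewrite sumEFin lee_fin -mulr_sumr.
  have tel := @telescope_sumr R 0 m (fun k => - (k.+1%:R)^-1) (leq0n m).
  rewrite (eq_bigr (fun k => - (k.+2%:R)^-1 - - (k.+1%:R)^-1 : R)); last first.
    by move=> k _; rewrite opprK addrC.
  rewrite tel /= opprK; apply: ler_piMr; first by rewrite mulr_ge0.
  rewrite invr1 addrC lerBlDr lerDl invr_ge0 //.
have h0 := lim_sup_set_cvg0 mE hsum.
exists (lim_sup_set E); split => //.
  apply: bigcapT_measurable => m; apply: bigcup_measurable => k _; exact: mE.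
move=> w /= nW m _.
apply: contrapT => H; apply: nW.
exists (maxn m N) => // n /= hn.
have nE : ~ E n w.
  by move=> Ew; apply: H; exists n => //=; apply: leq_trans hn; rewrite leq_maxl.
have Nn : (N <= n)%N by apply: leq_trans hn; rewrite leq_maxr.
rewrite /E Nn in nE.
rewrite leNgt; apply/negP => hg; apply: nE.
have gw : goodf l s x xi [ffun k : 'I_n => dd k.+1 w].
  by rewrite /goodf; under eq_bigr do rewrite ffunE.
rewrite /Bset (bigD1 [ffun k : 'I_n => dd k.+1 w]) //=; left.
rewrite /cyl; apply: (big_ind (fun X : set Omega => X w)) => //.
by move=> k *; rewrite /= ffunE.
Qed.
Lemma rho_sq (R : realType) (q M : nat) (l : 'rV[R]_q -> 'rV[R]_q -> R)
  (s : 'rV[R]_q) (c : 'I_M -> 'rV[R]_q) (xi : nat -> 'rV[R]_q) db n i j :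
  (forall x y, 0 < l x y < 1) -> c j = s ->
  Gp l c xi db n i / Gp l c xi db n j =
  (\prod_(k < n) hh l s (c i) xi k.+1 (db k.+1)) ^+ 2.
Proof.
move=> hl cj; rewrite -prodrXl.
under eq_bigr do rewrite /hh sqr_sqrtr ?divr_ge0 ?ltW ?glik_gt0 //.
by rewrite prodf_div /Gp cj.
Qed.

Theorem theorem3 (R : realType) (q : nat) (S : set 'rV[R]_q)
  (l : 'rV[R]_q -> 'rV[R]_q -> R) (s : 'rV[R]_q) (xi : nat -> 'rV[R]_q)
  (dT : measure_display) (Omega : measurableType dT) (P : probability Omega R)
  (dd : nat -> Omega -> bool) (M : nat) (c : 'I_M -> 'rV[R]_q)
  (p0 : 'I_M -> R) (j : 'I_M) :
  compact S ->
  continuous (fun z : 'rV[R]_q * 'rV[R]_q => l z.1 z.2) ->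
  (forall x y, 0 < l x y < 1) ->
  s \in S ->
  (exists B : R, forall k, `|xi k| <= B) ->
  (forall k, (0 < k)%N -> measurable [set w | dd k w = true]) ->
  indep_bits P dd ->
  (forall k, (0 < k)%N -> P [set w | dd k w = true] = (l s (xi k))%:E) ->
  injective c ->
  (forall i, c i \in S) ->
  (forall i, 0 < p0 i < 1) ->
  \sum_(i < M) p0 i = 1 ->
  c j = s ->
  (forall i, i != j -> exists p : R, 1 / 2 < p /\
     (0 < limn_einf (fun n : nat =>
        ((n%:R `^ p)^-1 *
          \sum_(1 <= k < n.+1) (l s (xi k) - l (c i) (xi k)) ^+ 2)%:E))%E) ->
  {ae P, forall w, (fun k => phat l c p0 xi (fun k => dd k w) k j) @ \oo --> (1 : R)}.
Proof.
move=> _ _ hl _ _ hm hind hP _ _ hp0 hs cj hlim.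
have hp : forall i, 0 < p0 i by move=> i; case/andP: (hp0 i).
have hall : \forall w \near almost_everywhere P, forall i : 'I_M, i != j ->
    \forall n \near \oo,
      n%:R * \prod_(k < n) hh l s (c i) xi k.+1 (dd k.+1 w) <= 1.
  apply: filter_forall => i.
  have [ij|nij] := boolP (i != j); last first.
    by apply: nearW => w /=.
  move: (ae_rho hl hm hind hP (hlim i ij)); apply: filterS => w h _; exact: h.
apply: filterS hall => w hw.
apply: (@cvg_one R _ (\sum_(i < M | i != j) p0 i / p0 j)).
have hw' : \forall n \near \oo, forall i : 'I_M, i != j ->
    n%:R * \prod_(k < n) hh l s (c i) xi k.+1 (dd k.+1 w) <= 1.
  apply: filter_forall => i.
  have [ij|nij] := boolP (i != j); last first.
    by apply: nearW => n /=.
  by apply: filterS (hw i ij) => n h _.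
near=> n.
have hb := @phat_bound R q M l c p0 xi (fun k => dd k w) j n hl hp hs.
have hn1 : forall i : 'I_M, i != j ->
    n%:R * \prod_(k < n) hh l s (c i) xi k.+1 (dd k.+1 w) <= 1 by near: n.
have n0 : 0 < (n%:R : R) by near: n; exact: nbhs_infty_gtr.
have n1 : 1 <= (n%:R : R) by rewrite ler1n -(ltr0n R).
case/andP: hb => hb1 hb2; apply/andP; split => //.
apply: (le_trans hb2).
rewrite mulr_suml; apply: ler_sum => i ij.
rewrite (rho_sq _ _ _ _ hl cj).
apply: ler_wpM2l; first by rewrite divr_ge0 // ltW.
set r := \prod_(k < n) _.
have r0 : 0 <= r by apply: prodr_ge0 => k _; exact: sqrtr_ge0.
have := hn1 i ij; rewrite -/r => hr.
rewrite -[n%:R^-1]mul1r ler_pdivlMr //; nra.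
Unshelve. all: by end_near.
Qed.
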